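(* Let $\mathcal{S}$ be a state space, let the action space be $\mathbb{R}^D$, and let $\alpha>0$. Let $p_{\mathbf{z}}$ be a probability density on $\mathbb{R}^D$. For each state $\mathbf{s}_t\in\mathcal{S}$ let $g_\theta(\cdot\,|\,\mathbf{s}_t)=g^L_\theta\circ\cdots\circ g^1_\theta:\mathbb{R}^D\to\mathbb{R}^D$ be an invertible differentiable map with differentiable layers $g^i_\theta(\cdot\,|\,\mathbf{s}_t)$, let $\mathcal{S}_n$ be the set of indices $i$ for which $g^i_\theta$ is non-linear, write $\mathbf{a}^0=\mathbf{a}$, $\mathbf{a}^i=g^i_\theta\circ\cdots\circ g^1_\theta(\mathbf{a}|\mathbf{s}_t)$, and define $$Q_\theta(\mathbf{s}_t,\mathbf{a})=\alpha\log\Big(p_{\mathbf{z}}\big(g_\theta(\mathbf{a}|\mathbf{s}_t)\big)\prod_{i\in\mathcal{S}_n}\big|\det\mathbf{J}_{g^i_\theta}(\mathbf{a}^{i-1}|\mathbf{s}_t)\big|\Big).$$ Suppose that for each $i$, $|\det\mathbf{J}_{g^i_\theta}(\mathbf{a}^{i-1}|\mathbf{s}_t)|$ is a constant with respect to $\mathbf{a}^{i-1}$. Then $g^{-1}_\theta\big(\mathrm{argmax}_{\mathbf{z}}\,p_{\mathbf{z}}(\mathbf{z})\,\big|\,\mathbf{s}_t\big)=\mathrm{argmax}_{\mathbf{a}}\,Q_\theta(\mathbf{s}_t,\mathbf{a})$.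
   Context: $\mathbf{J}_{g^i_\theta}(\mathbf{a}^{i-1}|\mathbf{s}_t)$ denotes the Jacobian of the $i$-th layer $g^i_\theta(\cdot|\mathbf{s}_t)$ evaluated at $\mathbf{a}^{i-1}$. $g^{-1}_\theta(\cdot|\mathbf{s}_t)$ is the inverse of $g_\theta(\cdot|\mathbf{s}_t)$. Here $\mathrm{argmax}$ denotes the maximizer(s) of the given function, and $g_\theta^{-1}(\cdot|\mathbf{s}_t)$ is applied to the maximizer(s) of $p_{\mathbf{z}}$. *)

(* Defs.v *)
From HB Require Import structures.
From mathcomp Require Import all_boot all_order all_algebra.
From mathcomp Require Import all_classical all_reals all_analysis.
Set Implicit Arguments. Unset Strict Implicit. Unset Printing Implicit Defensive.
Import Order.TTheory GRing.Theory Num.Theory.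
Import numFieldNormedType.Exports.
Local Open Scope classical_set_scope.
Local Open Scope ring_scope.

Definition elog (R : realType) (x : R) : \bar R :=
  if (0 < x)%R then (ln x)%:E else -oo%E.

Definition argmax (T : Type) (d : Order.disp_t) (X : porderType d) (f : T -> X)
  : set T := [set x | forall y, (f y <= f x)%O].

(* Intermediate activations: acts layer s a k = a^k = g^k o ... o g^1 (a | s),
   where layer i (0-indexed) is the paper's g^{i+1}. *)
Fixpoint acts (R : realType) (D : nat) (S : Type)
  (layer : nat -> S -> 'rV[R]_D -> 'rV[R]_D) (s : S) (a : 'rV[R]_D) (k : nat)
  : 'rV[R]_D :=
  match k with
  | 0 => a
  | k'.+1 => layer k' s (acts layer s a k')
  end.

Definition flow (R : realType) (D L : nat) (S : Type)
  (layer : nat -> S -> 'rV[R]_D -> 'rV[R]_D) (s : S) (a : 'rV[R]_D) : 'rV[R]_D :=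
  acts layer s a L.

Definition is_linear_layer (R : realType) (D : nat) (f : 'rV[R]_D -> 'rV[R]_D) : Prop :=
  exists (M : 'M[R]_D) (b : 'rV[R]_D), forall x, f x = x *m M + b.

Definition Qfun (R : realType) (D L : nat) (S : Type) (alpha : R)
  (pz : 'rV[R]_D -> R) (layer : nat -> S -> 'rV[R]_D -> 'rV[R]_D)
  (s : S) (a : 'rV[R]_D) : \bar R :=
  (alpha%:E * elog (pz (flow L layer s a) *
      \prod_(i < L | `[< ~ is_linear_layer (layer i s) >])
          `|\det ('J (layer i s) (acts layer s a i))|))%E.

(* Main.v *)
Require Import Defs.
From HB Require Import structures.
From mathcomp Require Import all_boot all_order all_algebra.
From mathcomp Require Import all_classical all_reals all_analysis.
Import Order.TTheory GRing.Theory Num.Theory.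
Import numFieldNormedType.Exports.
Local Open Scope classical_set_scope.
Local Open Scope ring_scope.

Section Helpers.
Context {R : realType}.

Lemma jac_comp n m p (f : 'rV[R]_n -> 'rV[R]_m) (g : 'rV[R]_m -> 'rV[R]_p) x :
  differentiable f x -> differentiable g (f x) ->
  'J (g \o f) x = 'J f x *m 'J g (f x).
Proof.
move=> df dg; apply/row_matrixP => i.
rewrite !rowE mulmxA /jacobian !mul_rV_lin1 diff_comp //=.
Qed.

Lemma jac_id n (x : 'rV[R]_n) : 'J id x = 1%:M.
Proof.
apply/row_matrixP => i.
rewrite !rowE /jacobian mul_rV_lin1 mulmx1.
by rewrite (@diff_val _ _ _ _ _ _ _ (is_diff_id x)).
Qed.

Lemma elog_le (x y : R) : 0 <= x -> 0 <= y -> (elog x <= elog y)%E = (x <= y).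
Proof.
move=> x0 y0; rewrite /elog.
case: ltP => xp; case: ltP => yp.
- by rewrite lee_fin ler_ln // posrE.
- have -> : y = 0 by apply/eqP; rewrite eq_le yp y0.
  by rewrite leeNy_eq; apply/esym/negbTE; rewrite -ltNge.
- have -> : x = 0 by apply/eqP; rewrite eq_le xp x0.
  by rewrite leNye ltW.
- have -> : x = 0 by apply/eqP; rewrite eq_le xp x0.
  by rewrite lexx.
Qed.

Lemma one_mul_neq0 (x y : R) : 1 = x * y -> y != 0.
Proof. by move=> h; apply/eqP => y0; move: h; rewrite y0 mulr0 => /eqP; rewrite oner_eq0. Qed.

Lemma prod_each n (F : 'I_n -> R) : \prod_(i < n) F i != 0 -> forall i, F i != 0.
Proof. by move=> /prodf_neq0 h i; apply: h. Qed.

Lemma Qmono (alpha K x y : R) : 0 < alpha -> 0 < K -> 0 <= x -> 0 <= y ->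
  (alpha%:E * elog (x * K) <= alpha%:E * elog (y * K))%E = (x <= y).
Proof.
move=> a0 K0 x0 y0.
rewrite lee_pmul2l ?lte_fin //.
rewrite elog_le; first by rewrite ler_pM2r.
- by rewrite mulr_ge0 // ltW.
- by rewrite mulr_ge0 // ltW.
Qed.

End Helpers.

Theorem proposition3p2 (R : realType) (D L : nat) (S : Type) (alpha : R)
  (pz : 'rV[R]_D -> R) (layer : nat -> S -> 'rV[R]_D -> 'rV[R]_D)
  (ginv : S -> 'rV[R]_D -> 'rV[R]_D) :
  0 < alpha ->
  (forall z, 0 <= pz z) ->
  (forall i s x, (i < L)%N -> differentiable (layer i s) x) ->
  (forall s, cancel (flow L layer s) (ginv s)) ->
  (forall s, cancel (ginv s) (flow L layer s)) ->
  (forall s y, differentiable (ginv s) y) ->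
  (forall i s, (i < L)%N -> exists c : R,
      forall x, `|\det ('J (layer i s) x)| = c) ->
  forall s : S,
    ginv s @` argmax pz = argmax (Qfun L alpha pz layer s).
Proof.
move=> a0 pz0 dl gK Kg dg hc s.
have acts_diff : forall k a, (k <= L)%N ->
    differentiable (fun b => acts layer s b k) a /\
    \det ('J (fun b => acts layer s b k) a) =
      \prod_(i < k) \det ('J (layer i s) (acts layer s a i)).
  elim=> [|k IH] a kL.
  - split; first exact: ex_diff.
    by rewrite big_ord0 jac_id det1.
  - have [d1 e1] := IH a (ltnW kL).
    have d2 : differentiable (layer k s) (acts layer s a k) by exact: dl.
    split.
    + exact: (@differentiable_comp _ _ _ _ (fun b => acts layer s b k) (layer k s)).
    + rewrite big_ord_recr /= -e1.
      have -> : (fun b => acts layer s b k.+1) =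
                (layer k s \o (fun b => acts layer s b k)) by [].
      by rewrite jac_comp // det_mulmx.
have detne : forall a, \det ('J (flow L layer s) a) != 0.
  move=> a.
  have [d1 _] := acts_diff L a (leqnn L).
  have d1' : differentiable (flow L layer s) (ginv s (flow L layer s a)) by rewrite gK.
  have e := @jac_comp _ _ _ _ (ginv s) (flow L layer s) (flow L layer s a) (dg s _) d1'.
  have hid : flow L layer s \o ginv s = id by apply/funext => y; rewrite /= Kg.
  rewrite hid jac_id gK in e.
  have := congr1 (@determinant _ D) e.
  rewrite det1 det_mulmx => h.
  exact: one_mul_neq0 h.
have layne : forall a (i : 'I_L),
    \det ('J (layer i s) (acts layer s a i)) != 0.
  move=> a i; have [_ e] := acts_diff L a (leqnn L).
  have h2 : \prod_(i < L) \det ('J (layer i s) (acts layer s a i)) != 0.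
    rewrite -e; exact: (detne a).
  exact: prod_each h2 i.
pose P a := \prod_(i < L | `[< ~ is_linear_layer (layer i s) >])
          `|\det ('J (layer i s) (acts layer s a i))|.
have Ppos : forall a, 0 < P a.
  move=> a; rewrite /P; apply: prodr_gt0 => i _.
  by rewrite normr_gt0 layne.
have Pconst : forall a b, P a = P b.
  move=> a b; rewrite /P; apply: eq_bigr => i _.
  have [c hc'] := hc i s (ltn_ord i).
  exact: (etrans (hc' _) (esym (hc' _))).
have Qle : forall a b, (Qfun L alpha pz layer s a <= Qfun L alpha pz layer s b)%E
    = (pz (flow L layer s a) <= pz (flow L layer s b)).
  move=> a b.
  have QE : forall a, Qfun L alpha pz layer s a =
      (alpha%:E * elog (pz (flow L layer s a) * P a))%E by [].
  rewrite (QE a) (QE b) (Pconst b a).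
  exact: Qmono.
apply/seteqP; split.
- move=> _ [z zmax <-] b /=.
  by rewrite Qle Kg; apply: zmax.
- move=> a amax; exists (flow L layer s a); last by rewrite gK.
  move=> y /=; have := amax (ginv s y); rewrite /= Qle Kg; exact.
Qed.
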